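(* Let $\mathcal G=(\mathcal N,\mathcal E_Q)$ be an undirected connected graph on the player set $\mathcal N=[n]$, and let $(\mathcal N,\mathcal S,\mathcal A,\mathbb P,(r_i)_{i\in\mathcal N},\gamma)$ be an infinite-horizon $\gamma$-discounted Markov game with $n>2$ players. Then this Markov game is an NMG with respect to $\mathcal G$ if and only if both of the following hold: (1) for each $i\in\mathcal N$, $s\in\mathcal S$, $a_i\in\mathcal A_i$, the function $r_i(s,a_i,\cdot)$ (of $a_{-i}$) is decomposable with respect to $\mathcal E_{Q,i}$, i.e. there are non-negative functions $r_{i,j}(s,a_i,\cdot):\mathcal A_j\to\mathbb R_{\ge 0}$, $j\in\mathcal E_{Q,i}$, with $r_i(s,\mathbf a)=\sum_{j\in\mathcal E_{Q,i}}r_{i,j}(s,a_i,a_j)$ for all $\mathbf a\in\mathcal A$; (2) for each $s,s'\in\mathcal S$, the function $\mathbf a\mapsto\mathbb P(s'\mid s,\mathbf a)$ is decomposable with respect to $\mathcal N_C$, i.e. if $\mathcal N_C\neq\emptyset$ there are non-negative functions $\mathbb F_i(s'\mid s,\cdot):\mathcal A_i\to\mathbb R_{\ge0}$, $i\in\mathcal N_C$, with $\mathbb P(s'\mid s,\mathbf a)=\sum_{i\in\mathcal N_C}\mathbb F_i(s'\mid s,a_i)$ for all $\mathbf a$, and if $\mathcal N_C=\emptyset$ there is a non-negative constant $\mathbb F_o(s'\mid s)$ with $\mathbb P(s'\mid s,\mathbf a)=\mathbb F_o(s'\mid s)$ for all $\mathbf a$. Moreover, the Markov game is a zero-sum NMG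 with respect to $\mathcal G$ if and only if (1) and (2) hold and, in addition, for every $s\in\mathcal S$ the network game with payoff functions $(r_{i,j}(s,\cdot,\cdot))_{(i,j)\in\mathcal E_Q}$ from (1) is zero-sum, i.e. $\sum_{i\in\mathcal N}\sum_{j\in\mathcal E_{Q,i}}r_{i,j}(s,a_i,a_j)=0$ for all $\mathbf a\in\mathcal A$. Finally, when there are exactly two players, every Markov game is an NMG and every zero-sum Markov game is a zero-sum NMG.
   Context: An infinite-horizon $\gamma$-discounted Markov game $(\mathcal N,\mathcal S,\mathcal A,\mathbb P,(r_i)_{i\in\mathcal N},\gamma)$ has finite player set $\mathcal N=[n]$, finite state space $\mathcal S$, finite action sets $\mathcal A_i$ with $\mathcal A=\prod_{i}\mathcal A_i$, transition kernel $\mathbb P(\cdot\mid s,\mathbf a)\in\Delta(\mathcal S)$, rewards $r_i:\mathcal S\times\mathcal A\to[0,R]$, and $\gamma\in(0,1)$. For a graph $(\mathcal N,\mathcal E)$, $\mathcal E_i$ denotes the set of neighbors of $i$ (excluding $i$), and $\mathcal N_C$ denotes the set of nodes adjacent to every other node (possibly empty). The game is an NMG (Markov game with networked separable interactions) with respect to $\mathcal G=(\mathcal N,\mathcal E_Q)$ if for every function $V:\mathcal S\to\mathbb R$, setting $Q_i^V(s,\mathbf a):=r_i(s,\mathbf a)+\gamma\sum_{s'}\mathbb P(s'\mid s,\mathbf a)V(s')$, there exist functions $(Q^V_{i,j})_{(i,j)\in\mathcal E_Q}$ with $Q_i^V(s,\mathbf a)=\sum_{j\in\mathcal E_{Q,i}}Q^V_{i,j}(s,a_i,a_j)$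 for all $i,s,\mathbf a$. It is a zero-sum NMG if in addition, for every $s$, the functions $Q^{\mathbf 0}_{i,j}(s,\cdot,\cdot)$ (with $V\equiv0$) form a zero-sum network game, i.e. $\sum_i\sum_{j\in\mathcal E_{Q,i}}Q^{\mathbf0}_{i,j}(s,a_i,a_j)=0$ for all $\mathbf a$. A zero-sum Markov game means $\sum_i r_i(s,\mathbf a)=0$ for all $s,\mathbf a$. *)

(* Defs.v *)
From HB Require Import structures.
From mathcomp Require Import all_boot all_order all_algebra.
From mathcomp Require Import reals.
Set Implicit Arguments. Unset Strict Implicit. Unset Printing Implicit Defensive.
Import Order.TTheory GRing.Theory Num.Theory.
Local Open Scope ring_scope.

Section MarkovGames.
Variables (R : realType) (n : nat) (S : finType) (A : 'I_n -> finType).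

Definition joint := forall i : 'I_n, A i.

Definition is_markov_game (P : S -> joint -> S -> R) (r : 'I_n -> S -> joint -> R)
    (Rmax gamma : R) : Prop :=
  [/\ 0 < gamma < 1,
      (forall s a s', 0 <= P s a s'),
      (forall s a, \sum_(s' : S) P s a s' = 1) &
      (forall i s a, 0 <= r i s a <= Rmax)].

Definition zero_sum_mg (r : 'I_n -> S -> joint -> R) : Prop :=
  forall s a, \sum_(i < n) r i s a = 0.

Definition nbrs (e : rel 'I_n) (i : 'I_n) : {set 'I_n} :=
  [set j | (j != i) && e i j].

Definition NC (e : rel 'I_n) : {set 'I_n} :=
  [set i | [forall j, (j != i) ==> e i j]].

Definition QV (P : S -> joint -> S -> R) (r : 'I_n -> S -> joint -> R) (gamma : R)
    (V : S -> R) (i : 'I_n) (s : S) (a : joint) : R :=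
  r i s a + gamma * \sum_(s' : S) P s a s' * V s'.

Definition decomposes (e : rel 'I_n) (Q : 'I_n -> S -> joint -> R)
    (Qij : forall i j : 'I_n, S -> A i -> A j -> R) : Prop :=
  forall i s a, Q i s a = \sum_(j in nbrs e i) Qij i j s (a i) (a j).

Definition network_zero_sum (e : rel 'I_n)
    (Qij : forall i j : 'I_n, S -> A i -> A j -> R) : Prop :=
  forall s (a : joint),
    \sum_(i < n) \sum_(j in nbrs e i) Qij i j s (a i) (a j) = 0.

Definition is_NMG (e : rel 'I_n) P r gamma : Prop :=
  forall V : S -> R, exists Qij, decomposes e (QV P r gamma V) Qij.

Definition is_zero_sum_NMG (e : rel 'I_n) P r gamma : Prop :=
  is_NMG e P r gamma /\
  exists Qij, decomposes e (QV P r gamma (fun _ => 0)) Qij /\ network_zero_sum e Qij.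

Definition reward_decomp_witness (e : rel 'I_n) (r : 'I_n -> S -> joint -> R)
    (rij : forall i j : 'I_n, S -> A i -> A j -> R) : Prop :=
  (forall i j s ai aj, j \in nbrs e i -> 0 <= rij i j s ai aj) /\ decomposes e r rij.

Definition cond1 (e : rel 'I_n) r : Prop := exists rij, reward_decomp_witness e r rij.

Definition cond2 (e : rel 'I_n) (P : S -> joint -> S -> R) : Prop :=
  forall s s' : S,
    (NC e != set0 ->
      exists F : forall i : 'I_n, A i -> R,
        (forall i ai, i \in NC e -> 0 <= F i ai) /\
        (forall a : joint, P s a s' = \sum_(i in NC e) F i (a i))) /\
    (NC e = set0 ->
      exists c : R, 0 <= c /\ forall a : joint, P s a s' = c).

Definition cond1_zero_sum (e : rel 'I_n) r : Prop :=
  exists rij, reward_decomp_witness e r rij /\ network_zero_sum e rij.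

Definition simple_connected_graph (e : rel 'I_n) : Prop :=
  [/\ symmetric e, irreflexive e & forall i j, connect e i j].

End MarkovGames.

(* Main.v *)
Require Import Defs.
From HB Require Import structures.
From mathcomp Require Import all_boot all_order all_algebra.
From mathcomp Require Import reals boolp ring lra zify.
Import Order.TTheory GRing.Theory Num.Theory.
Local Open Scope ring_scope.
Unset Printing Implicit Defensive.

Section Aux.
Variables (R : realType) (n : nat) (A : 'I_n -> finType).

Definition upd (a : joint A) (k : 'I_n) (x : A k) : joint A :=
  fun l => match k =P l with ReflectT h => eq_rect k A x l h | ReflectF _ => a l end.

Lemma upd_eq a k x : upd a k x k = x.
Proof. rewrite /upd; case: eqP => [h|//]; by rewrite (eq_irrelevance h erefl). Qed.

Lemma upd_neq a k x l : k != l -> upd a k x l = a l.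
Proof. rewrite /upd => /negP H; case: eqP => // h; by exfalso; apply: H; apply/eqP. Qed.

Lemma upd_id a k : upd a k (a k) = a.
Proof.
apply: functional_extensionality_dep => l.
by case: (eqVneq k l) => [<-|h]; [rewrite upd_eq | rewrite upd_neq].
Qed.

Lemma upd_upd a k x y : upd (upd a k x) k y = upd a k y.
Proof.
apply: functional_extensionality_dep => l.
by case: (eqVneq k l) => [<-|h]; [rewrite !upd_eq | rewrite !upd_neq].
Qed.

Lemma sep (f : joint A -> R) (u : 'I_n -> joint A -> R) a0 :
  (forall k a b, a k = b k -> u k a = u k b) ->
  (forall a, f a = \sum_k u k a) ->
  forall a, f a = f a0 + \sum_k (f (upd a0 k (a k)) - f a0).
Proof.
move=> Hu Hf a.
have E k : f (upd a0 k (a k)) - f a0 = u k a - u k a0.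
  rewrite !Hf (bigD1 k) //= [X in _ - X](bigD1 k) //=.
  rewrite (Hu k (upd a0 k (a k)) a); last by rewrite upd_eq.
  rewrite (eq_bigr (fun l => u l a0)); last first.
    by move=> l Hl; apply: Hu; rewrite upd_neq // eq_sym.
  ring.
rewrite (eq_bigr _ (fun k _ => E k)) sumrB -!Hf; ring.
Qed.

Lemma ifsum (T : {set 'I_n}) t0 (C : R) : t0 \in T ->
  \sum_(j in T) (if j == t0 then C else 0) = C.
Proof.
move=> Ht; rewrite (bigD1 t0) //= eqxx big1 ?addr0 // => j /andP[_ /negbTE ->] //.
Qed.

Definition argm (u : forall j, A j -> R) (a0 : joint A) j : A j :=
  [arg min_(y < a0 j) u j y]%O.

Definition shiftF (T : {set 'I_n}) t0 (u : forall j, A j -> R) (a0 : joint A) j (y : A j) : R :=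
  u j y - u j (argm u a0 j) +
  (if j == t0 then \sum_(l in T) u l (argm u a0 l) else 0).

Lemma shiftP (T : {set 'I_n}) t0 (u : forall j, A j -> R) (a0 : joint A) :
  t0 \in T -> (forall a : joint A, 0 <= \sum_(j in T) u j (a j)) ->
  (forall j y, 0 <= shiftF T t0 u a0 j y) /\
  (forall a : joint A, \sum_(j in T) shiftF T t0 u a0 j (a j) = \sum_(j in T) u j (a j)).
Proof.
move=> Ht Hpos; split.
  move=> j y; rewrite /shiftF; apply: addr_ge0.
    rewrite subr_ge0 /argm; case: arg_minP => // z _ Hz; exact: Hz.
  by case: ifP => // _; exact: (Hpos (fun l => argm u a0 l)).
move=> a; rewrite /shiftF big_split /= ifsum // sumrB; ring.
Qed.


Lemma star_sep (e : rel 'I_n) (f : joint A -> R) (g : forall i j, A i -> A j -> R)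
  (a0 : joint A) (i i1 i2 : 'I_n) :
  i1 != i -> i2 != i -> i1 != i2 ->
  (forall m a, f a = \sum_(j in nbrs e m) g m j (a m) (a j)) ->
  forall a, f a = f a0 + \sum_k (f (upd a0 k (a k)) - f a0).
Proof.
move=> h1 h2 h12 Hf.
pose D a := f a - f (upd a i (a0 i)).
have Dform m a : m != i -> D a = \sum_(j in nbrs e m)
     (g m j (a m) (a j) - g m j (a m) (upd a i (a0 i) j)).
  move=> hm; rewrite /D !(Hf m) -sumrB; apply: eq_bigr => j _.
  by rewrite (upd_neq _ _ _ m) // eq_sym.
have loc m a b : m != i -> a m = b m -> a i = b i -> D a = D b.
  move=> hm Hm Hi; rewrite !(Dform m) //; apply: eq_bigr => j _; rewrite Hm.
  case: (eqVneq i j) => [<-|h]; first by rewrite !upd_eq Hi.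
  by rewrite !upd_neq // !subrr.
have Hstar a : f a = f (upd a i (a0 i)) + (f (upd a0 i (a i)) - f a0).
  have -> : f (upd a0 i (a i)) - f a0 = D (upd a0 i (a i)).
    by rewrite /D upd_upd upd_id.
  rewrite -(loc i1 (upd a i1 (a0 i1))) //; last 2 first.
  - by rewrite upd_eq upd_neq // eq_sym.
  - by rewrite upd_eq upd_neq.
  rewrite -(loc i2 a) //; last 2 first.
  - by rewrite upd_neq.
  - by rewrite upd_neq // eq_sym.
  rewrite /D; ring.
pose u k (b : joint A) := (if k \in nbrs e i then g i k (a0 i) (b k) else 0) +
   (if k == i then f (upd a0 i (b i)) - f a0 else 0).
apply: (@sep f u).
  move=> k a b Hab; rewrite /u; case: (eqVneq k i) Hab => [->|h] Hab.
    by rewrite -Hab.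
  by rewrite Hab.
move=> a; rewrite /u big_split /= -big_mkcond /= -big_mkcond /= big_pred1_eq.
rewrite {1}Hstar; congr (_ + _); rewrite (Hf i) upd_eq; apply: eq_bigr => j.
by rewrite inE => /andP[hj _]; rewrite upd_neq // eq_sym.
Qed.

Lemma notNC_const (e : rel 'I_n) (f : joint A -> R) (g : forall i j, A i -> A j -> R)
  (a0 : joint A) k (x : A k) :
  symmetric e -> k \notin NC e ->
  (forall m a, f a = \sum_(j in nbrs e m) g m j (a m) (a j)) ->
  f (upd a0 k x) = f a0.
Proof.
move=> hs; rewrite inE => /forallPn [m]; rewrite negb_imply => /andP[mk nekm] Hf.
rewrite !(Hf m) upd_neq 1?eq_sym //; apply: eq_bigr => j; rewrite inE => /andP[_ hj].
rewrite upd_neq //; apply/eqP => hkj; move: hj; rewrite -hkj hs.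
by rewrite (negbTE nekm).
Qed.

Lemma NC_rep (e : rel 'I_n) (f : joint A -> R) (g : forall i j, A i -> A j -> R)
  (a0 : joint A) : symmetric e -> (2 < n)%N ->
  (forall m a, f a = \sum_(j in nbrs e m) g m j (a m) (a j)) ->
  forall a, f a = f a0 + \sum_(k in NC e) (f (upd a0 k (a k)) - f a0).
Proof.
move=> hs hn Hf a.
have h0 : (0 < n)%N by lia.
have h1 : (1 < n)%N by lia.
rewrite (@star_sep e f g a0 (Ordinal h0) (Ordinal h1) (Ordinal hn)) //.
congr (_ + _); rewrite [RHS]big_mkcond; apply: eq_bigr => k _.
case: ifPn => // hk; by rewrite (notNC_const e f g a0 k (a k) hs hk Hf) subrr.
Qed.

Lemma nbr_exists (e : rel 'I_n) : simple_connected_graph e -> (1 < n)%N ->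
  forall i, exists j, j \in nbrs e i.
Proof.
case=> hs hirr hc hn i.
have h0 : (0 < n)%N by lia.
pose j : 'I_n := if val i == 0%N then Ordinal hn else Ordinal h0.
have hji : j != i.
  rewrite /j; case: ifP => h; apply/eqP => /(congr1 val) /= hv.
    by move: h; change (\val i) with (nat_of_ord i); rewrite -hv.
  by move: h; change (\val i) with (nat_of_ord i); rewrite -hv.
case/connectP: (hc i j) => [[|y p]] /=; first by move=> _ hj; rewrite hj eqxx in hji.
case/andP=> hy _ _; exists y; rewrite inE hy andbT.
by apply/eqP => hyi; move: hy; rewrite hyi hirr.
Qed.

Definition j0 (e : rel 'I_n) i := odflt i [pick j in nbrs e i].

Lemma j0P (e : rel 'I_n) : simple_connected_graph e -> (1 < n)%N ->
  forall i, j0 e i \in nbrs e i.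
Proof.
move=> hg hn i; rewrite /j0; case: pickP => [j -> //|H].
by case: (nbr_exists e hg hn i) => j; rewrite (H j).
Qed.

End Aux.
Arguments upd {n A}.
Arguments upd_eq {n A}.
Arguments upd_neq {n A}.
Arguments upd_id {n A}.
Arguments upd_upd {n A}.
Arguments sep {R n A}.
Arguments ifsum {R n}.
Arguments argm {R n A}.
Arguments shiftF {R n A}.
Arguments shiftP {R n A}.
Arguments star_sep {R n A}.
Arguments notNC_const {R n A}.
Arguments NC_rep {R n A}.
Arguments nbr_exists {n}.
Arguments j0 {n}.
Arguments j0P {n}.


Section Main.
Variables (R : realType) (n : nat) (S : finType) (A : 'I_n -> finType).
Variables (e : rel 'I_n) (P : S -> joint A -> S -> R) (r : 'I_n -> S -> joint A -> R)
  (Rmax gamma : R).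

Lemma QV0 i s a : QV P r gamma (fun _ => 0) i s a = r i s a.
Proof. by rewrite /QV big1 ?mulr0 ?addr0 // => ? _; rewrite mulr0. Qed.

Lemma QVind s' i s a :
  QV P r gamma (fun x => if x == s' then 1 else 0) i s a = r i s a + gamma * P s a s'.
Proof.
rewrite /QV (bigD1 s') //= eqxx mulr1 big1 ?addr0 // => x /negbTE ->; by rewrite mulr0.
Qed.

Lemma NMG_cond1 (a0 : joint A) : simple_connected_graph e -> (1 < n)%N ->
  is_markov_game P r Rmax gamma -> is_NMG e P r gamma -> cond1 e r.
Proof.
move=> hg hn [_ _ _ hr] HN.
case: (HN (fun _ => 0)) => Q0 HQ0.
have Hr i s a : r i s a = \sum_(j in nbrs e i) Q0 i j s (a i) (a j).
  by rewrite -QV0 HQ0.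
exists (fun i j s x y => shiftF (nbrs e i) (j0 e i) (fun j y => Q0 i j s x y) a0 j y).
have key i s (x : A i) := shiftP (nbrs e i) (j0 e i) (fun j y => Q0 i j s x y) a0
   (j0P e hg hn i).
have pos i s (x : A i) (b : joint A) : 0 <= \sum_(j in nbrs e i) Q0 i j s x (b j).
  have := Hr i s (upd b i x); rewrite upd_eq.
  rewrite (eq_bigr (fun j => Q0 i j s x (b j))); last first.
    by move=> j; rewrite inE => /andP[hj _]; rewrite upd_neq // eq_sym.
  move=> <-; by case/andP: (hr i s (upd b i x)).
split.
  by move=> i j s x y _; case: (key i s x (pos i s x)) => H _; apply: H.
move=> i s a; rewrite Hr; case: (key i s (a i) (pos i s (a i))) => _ H.
by rewrite H.
Qed.

Lemma NMG_g (s s' : S) : gamma != 0 -> is_NMG e P r gamma ->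
  exists g : forall i j, A i -> A j -> R,
    forall m a, P s a s' = \sum_(j in nbrs e m) g m j (a m) (a j).
Proof.
move=> hg HN.
case: (HN (fun _ => 0)) => Q0 HQ0.
case: (HN (fun x => if x == s' then 1 else 0)) => Q1 HQ1.
exists (fun i j x y => (Q1 i j s x y - Q0 i j s x y) / gamma) => m a.
rewrite -mulr_suml sumrB -HQ1 -HQ0 QV0 QVind; field; exact: hg.
Qed.

Lemma NMG_cond2 (a0 : joint A) : simple_connected_graph e -> (2 < n)%N ->
  is_markov_game P r Rmax gamma -> is_NMG e P r gamma -> cond2 e P.
Proof.
move=> hg hn [hgam hP _ _] HN s s'.
have hg0 : gamma != 0 by case/andP: hgam => h _; rewrite gt_eqF.
case: (NMG_g s s' hg0 HN) => g Hg.
have hs : symmetric e by case: hg.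
have rep := NC_rep e (fun a => P s a s') g a0 hs hn Hg.
split.
  case/set0Pn => t0 Ht0.
  pose u k (x : A k) := P s (upd a0 k x) s' - P s a0 s' + (if k == t0 then P s a0 s' else 0).
  have hu (a : joint A) : \sum_(k in NC e) u k (a k) = P s a s'.
    rewrite /u big_split /= ifsum // (rep a); ring.
  have hpos (a : joint A) : 0 <= \sum_(k in NC e) u k (a k) by rewrite hu.
  have [H1 H2] := shiftP (NC e) t0 u a0 Ht0 hpos.
  exists (shiftF (NC e) t0 u a0); split; first by move=> i ai _; apply: H1.
  by move=> a; rewrite H2 hu.
move=> HNC; exists (P s a0 s'); split => // a.
by rewrite (rep a) HNC big_set0 addr0.
Qed.


Lemma cond2_rep : cond2 e P ->
  exists F : S -> S -> forall i, A i -> R, exists c : S -> S -> R,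
    forall s s' a, P s a s' = c s s' + \sum_(k in NC e) F s s' k (a k).
Proof.
move=> H2; case: (eqVneq (NC e) set0) => HNC.
  have : forall ss : S * S, exists c : R, 0 <= c /\ forall a, P ss.1 a ss.2 = c.
    by move=> [s s']; apply: (H2 s s').2.
  case/choice => cf Hcf.
  exists (fun _ _ _ _ => 0), (fun s s' => cf (s, s')) => s s' a.
  by rewrite HNC big_set0 addr0 (proj2 (Hcf (s, s'))).
have : forall ss : S * S, exists F : forall i, A i -> R,
    (forall i ai, i \in NC e -> 0 <= F i ai) /\
    (forall a : joint A, P ss.1 a ss.2 = \sum_(i in NC e) F i (a i)).
  by move=> [s s']; apply: (H2 s s').1.
case/choice => Ff HF.
exists (fun s s' => Ff (s, s')), (fun _ _ => 0) => s s' a.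
by rewrite add0r (proj2 (HF (s, s'))).
Qed.

Lemma cond12_NMG : simple_connected_graph e -> (1 < n)%N ->
  cond1 e r -> cond2 e P -> is_NMG e P r gamma.
Proof.
move=> hg hn [rij [_ Hr]] H2 V.
case: (cond2_rep H2) => F [c HP].
have hs : symmetric e by case: hg.
pose H s k (x : A k) := \sum_(s' : S) V s' * F s s' k x.
pose C s := \sum_(s' : S) V s' * c s s'.
exists (fun i j s (x : A i) (y : A j) => rij i j s x y
   + (if j \in NC e then gamma * H s j y else 0)
   + (if j == j0 e i then gamma * (C s + (if i \in NC e then H s i x else 0)) else 0)).
move=> i s a.
have E1 : \sum_(s' : S) P s a s' * V s' = C s + \sum_(k in NC e) H s k (a k).
  rewrite /C /H exchange_big /= -big_split /=; apply: eq_bigr => s' _.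
  rewrite HP mulrDl mulr_suml mulrC; congr (_ + _); apply: eq_bigr => k _; exact: mulrC.
have E2 : \sum_(k in NC e) H s k (a k) = (if i \in NC e then H s i (a i) else 0)
     + \sum_(j in nbrs e i) (if j \in NC e then H s j (a j) else 0).
  rewrite big_mkcond [X in _ + X]big_mkcond /=.
  have tmp : \sum_(k | k == i) (if i \in NC e then H s i (a i) else 0) =
     (if i \in NC e then H s i (a i) else 0) by rewrite big_pred1_eq.
  rewrite -[X in X + _]tmp.
  rewrite [X in _ = X + _]big_mkcond -big_split /=. apply: eq_bigr => k _.
  case: (eqVneq k i) => [->|hki].
    have -> : (i \in nbrs e i) = false by rewrite /nbrs inE eqxx.
    by rewrite addr0.
  have -> : (k \in nbrs e i) = e i k by rewrite /nbrs inE hki.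
  rewrite add0r.
  case: ifPn => [hk|_]; last by case: ifP.
  suff -> : e i k by [].
  rewrite hs; move: hk; rewrite /NC inE => /forallP /(_ i) /implyP; apply.
  by rewrite eq_sym.
rewrite /QV (Hr i s a) E1 E2 !big_split /= ifsum ?(j0P e hg hn) //.
rewrite [X in _ = _ + X + _](eq_bigr (fun j => gamma * (if j \in NC e then H s j (a j) else 0))); last first.
  by move=> j _; case: ifP => //; rewrite mulr0.
rewrite -mulr_sumr; ring.
Qed.


Lemma empty_all : ~ (exists a0 : joint A, True) ->
  [/\ is_NMG e P r gamma, cond1 e r, cond2 e P, cond1_zero_sum e r &
      is_zero_sum_NMG e P r gamma].
Proof.
move=> Hemp.
have F (a : joint A) : False by apply: Hemp; exists a.
have HN : is_NMG e P r gamma by move=> V; exists (fun _ _ _ _ _ => 0) => i s a; case: (F a).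
split => //.
- exists (fun _ _ _ _ _ => 0); split; [move=> *; exact: lexx | move=> i s a; case: (F a)].
- move=> s s'; split.
    by move=> _; exists (fun _ _ => 0); split; [move=> *; exact: lexx | move=> a; case: (F a)].
  by move=> _; exists 0; split => // a; case: (F a).
- exists (fun _ _ _ _ _ => 0); split;
    [split; [move=> *; exact: lexx | move=> i s a; case: (F a)] | move=> s a; case: (F a)].
- split => //; exists (fun _ _ _ _ _ => 0); split => [i s a | s a]; case: (F a).
Qed.

Lemma zs_part : is_markov_game P r Rmax gamma ->
  (is_NMG e P r gamma <-> cond1 e r /\ cond2 e P) ->
  (is_zero_sum_NMG e P r gamma <-> [/\ cond1 e r, cond2 e P & cond1_zero_sum e r]).
Proof.
move=> [_ _ _ hr] Hiff; split.
  move=> [HN [Q [HQ HZ]]]; have [H1 H2] := Hiff.1 HN; split => //.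
  have r0 i s a : r i s a = 0.
    have := HZ s a.
    rewrite (eq_bigr (fun i => r i s a)); last by move=> j _; rewrite -(HQ j s a) QV0.
    move/psumr_eq0P => H; apply: H => // j _; by case/andP: (hr j s a).
  exists (fun _ _ _ _ _ => 0); split; first split.
  - by move=> *; exact: lexx.
  - by move=> i s a; rewrite r0 big1.
  by move=> s a; rewrite big1 // => i _; rewrite big1.
move=> [H1 H2 [rij [[_ Hr] HZ]]]; split; first by apply/Hiff.
by exists rij; split => // i s a; rewrite QV0; exact: Hr.
Qed.

End Main.
Arguments empty_all {R n S A}.
Arguments NMG_cond1 {R n S A}.
Arguments NMG_cond2 {R n S A}.
Arguments cond12_NMG {R n S A}.
Arguments zs_part {R n S A}.
Arguments QV0 {R n S A}.


Lemma I2 (i j k : 'I_2) : j != i -> k != i -> k = j.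
Proof.
move=> h1 h2; apply/val_inj; move: h1 h2; rewrite -!(inj_eq val_inj) /=.
move: (ltn_ord i) (ltn_ord j) (ltn_ord k); lia.
Qed.

Section Two.
Variables (R : realType) (S : finType) (A : 'I_2 -> finType).

Lemma two_decomp (e : rel 'I_2) (hg : simple_connected_graph e) (a0 : joint A)
  (Q : 'I_2 -> S -> joint A -> R) :
  decomposes e Q (fun i j s x y => Q i s (upd (upd a0 i x) j y)).
Proof.
move=> i s a.
have hN : nbrs e i = [set~ i].
  apply/setP => j; rewrite /nbrs !inE; case: (eqVneq j i) => //= hji.
  case: (nbr_exists e hg isT i) => y; rewrite /nbrs inE => /andP[hy hey].
  by rewrite (I2 i y j hy hji).
rewrite (eq_bigr (fun _ => Q i s a)).
  by rewrite sumr_const hN cardsC1 card_ord /= mulr1n.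
move=> j; rewrite /nbrs inE => /andP[hj _]; congr Q.
apply: functional_extensionality_dep => k.
case: (eqVneq j k) => [<-|hjk]; first by rewrite upd_eq.
rewrite upd_neq //; case: (eqVneq i k) => [<-|hik]; first by rewrite upd_eq.
by exfalso; move: hjk; rewrite (I2 i j k hj) ?eqxx // eq_sym.
Qed.

Lemma two_player (e : rel 'I_2) (P : S -> joint A -> S -> R) (r : 'I_2 -> S -> joint A -> R)
  (Rmax gamma : R) :
  simple_connected_graph e -> is_markov_game P r Rmax gamma ->
  is_NMG e P r gamma /\ (zero_sum_mg r -> is_zero_sum_NMG e P r gamma).
Proof.
move=> hg hm; case: (pselect (exists a0 : joint A, True)) => [[a0 _]|Hemp]; last first.
  by case: (empty_all e P r gamma Hemp).
have HN : is_NMG e P r gamma.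
  move=> V; eexists; exact: two_decomp hg a0 _.
split => // Hz; split => //; eexists; split; first exact: two_decomp hg a0 _.
move=> s a; rewrite -[RHS](Hz s a); apply: eq_bigr => i _.
by rewrite -(two_decomp e hg a0 (QV P r gamma (fun=> 0)) i s a) QV0.
Qed.

End Two.

Theorem proposition1 (R : realType) :
  (forall (n : nat) (S : finType) (A : 'I_n -> finType) (e : rel 'I_n)
          (P : S -> joint A -> S -> R) (r : 'I_n -> S -> joint A -> R)
          (Rmax gamma : R),
     (2 < n)%N ->
     simple_connected_graph e ->
     is_markov_game P r Rmax gamma ->
     (is_NMG e P r gamma <-> cond1 e r /\ cond2 e P) /\
     (is_zero_sum_NMG e P r gamma <-> [/\ cond1 e r, cond2 e P & cond1_zero_sum e r]))
  /\
  (forall (S : finType) (A : 'I_2 -> finType) (e : rel 'I_2)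
          (P : S -> joint A -> S -> R) (r : 'I_2 -> S -> joint A -> R)
          (Rmax gamma : R),
     simple_connected_graph e ->
     is_markov_game P r Rmax gamma ->
     is_NMG e P r gamma /\ (zero_sum_mg r -> is_zero_sum_NMG e P r gamma)).
Proof.
split; last by move=> *; apply: two_player; eassumption.
move=> n S A e P r Rmax gamma hn hg hm.
case: (pselect (exists a0 : joint A, True)) => [[a0 _]|Hemp]; last first.
  by case: (empty_all e P r gamma Hemp) => *; split; split.
have hn1 : (1 < n)%N by lia.
have Hiff : is_NMG e P r gamma <-> cond1 e r /\ cond2 e P.
  split => [HN|[H1 H2]].
    by split; [exact: (NMG_cond1 e P r Rmax gamma a0) | exact: (NMG_cond2 e P r Rmax gamma a0)].
  exact: cond12_NMG.
by split => //; apply: zs_part hm Hiff.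
Qed.
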